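(* Let $s\in\mathbb N$ and $\mathbf n=2^{2m_s}\mathbf 1+2^{m_s}\mathbf p+\mathbf q$ with $\mathbf 0\le\mathbf p,\mathbf q<2^{m_s}\mathbf 1$. Then for $\tau=\tau_F$ and every $\mathbf m<2^{m_s}\mathbf 1$, $$\widehat\tau_{\mathbf n}(\Delta^{(m_s)}_{\mathbf m})=2^{s-1-dm_s}W^{(m_s)}_{\mathbf q\mathbf m}\,\delta^{\mathbf p}_{\mathbf m}\,\mathrm I(\Delta^{(m_s)}_{\mathbf m}\subset\widetilde F_{s-1}),$$ and $$\widehat\tau_{\mathbf n}=2^{s-1-dm_s}W^{(m_s)}_{\mathbf q\mathbf p}\,\mathrm I(\Delta^{(m_s)}_{\mathbf p}\subset\widetilde F_{s-1}).$$
   Context: Fix $d\ge2$. $\mathbb G$ is the dyadic group: sequences $g=(g_k)_{k\ge0}$, $g_k\in\{0,1\}$, coordinatewise addition mod 2, product topology; $\mathbb G^d$ its $d$-th power. For $n\in\mathbb N_0$, $n=\sum_kn_k2^k$, $n_k\in\{0,1\}$. Dyadic interval of rank $k$: $\Delta^{(k)}_m=\{g: g_t=m_{k-1-t},\ 0\le t<k\}$; dyadic cube $\Delta^{(k)}_{\mathbf m}=\prod_l\Delta^{(k)}_{m^l}$. Vector order coordinatewise, $\mathbf 0,\mathbf 1$ the constant vectors. Walsh functions $W_n(g)=\prod_k(-1)^{g_kn_k}$, $W_{\mathbf n}(\mathbf g)=\prod_lW_{n^l}(g^l)$; $W^{(k)}_{\mathbf n\mathbf m}$ is the constant value of $W_{\mathbf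 n}$ on $\Delta^{(k)}_{\mathbf m}$ ($\mathbf n,\mathbf m<2^k\mathbf 1$); $R_{k\mathbf 1}:=W_{2^k\mathbf 1}$. $\delta^{\mathbf p}_{\mathbf m}$ is the Kronecker delta, $\mathrm I(\cdot)$ the indicator of a statement. Quasimeasure: $\tau$ on dyadic cubes with $\tau(\Delta^{(k)}_{\mathbf m})=\sum_{\boldsymbol\sigma\in\{0,1\}^d}\tau(\Delta^{(k+1)}_{2\mathbf m+\boldsymbol\sigma})$; for a dyadic cube $\Delta$ of rank $r$, $\widehat\tau_{\mathbf n}(\Delta):=\int_\Delta W_{\mathbf n}d\tau:=\sum_{\Delta^{(k)}_{\mathbf m}\subset\Delta}W^{(k)}_{\mathbf n\mathbf m}\tau(\Delta^{(k)}_{\mathbf m})$ for any $k\ge r$ with $\mathbf n<2^k\mathbf 1$, and $\widehat\tau_{\mathbf n}:=\widehat\tau_{\mathbf n}(\mathbb G^d)$. For nonempty closed $E$, $\tau_E$ is the unique nonnegative quasimeasure with $\tau_E(\mathbb G^d)=1$, $\tau_E(\Delta)=0$ iff $\Delta\cap E=\emptyset$, splitting the value of a cube meeting $E$ equally among its $2^d$ children that meet $E$. Let $m_1=0$, $m_{s+1}=2(2m_s+1)$; $F_s=\bigcup_{\mathbf m,\mathbf m'<2^{m_s}\mathbf 1}\{\mathbf g\in\Delta^{(2m_s)}_{2^{m_s}\mathbf m+\mathbf m'}: R_{2m_s\mathbf 1}(\mathbf g)=W^{(m_s)}_{\mathbf m\mathbf m'}\}$, $\widetilde F_s=\bigcap_{k=1}^sF_k$,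 $\widetilde F_0=\mathbb G^d$, $F=\bigcap_{s\ge1}F_s$. *)

(* Defs.v *)
From HB Require Import structures.
From mathcomp Require Import all_boot all_order all_algebra.
From mathcomp Require Import boolp classical_sets reals.
Set Implicit Arguments. Unset Strict Implicit. Unset Printing Implicit Defensive.
Import Order.TTheory GRing.Theory Num.Theory.
Local Open Scope classical_set_scope.
Local Open Scope ring_scope.

(* The dyadic group G = sequences of bits, and its d-th power. *)
Definition Gdy := nat -> bool.
Definition Gd (d : nat) := 'I_d -> Gdy.

Definition bit (n k : nat) : bool := odd (n %/ 2 ^ k).

(* Dyadic cube of rank k with (vector) index m:
   g^l_t = m^l_{k-1-t} for all 0 <= t < k and all l. *)
Definition cube (d k : nat) (m : 'I_d -> nat) : set (Gd d) :=
  [set g | forall (l : 'I_d) (t : nat), (t < k)%N -> g l t = bit (m l) (k - 1 - t)].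

Definition cube_point (d k : nat) (m : 'I_d -> nat) : Gd d :=
  fun l t => (t < k)%N && bit (m l) (k - 1 - t).

Section Walsh.
Variable R : realType.

(* W_n(g) = prod_k (-1)^{g_k n_k}; only k < n can have n_k = 1. *)
Definition W (n : nat) (g : Gdy) : R :=
  \prod_(t < n) (if g t && bit n t then -1 else 1).

Definition Wv (d : nat) (n : 'I_d -> nat) (g : Gd d) : R :=
  \prod_(l < d) W (n l) (g l).

(* W^{(k)}_{n m}: the constant value of W_n on the cube of rank k, index m *)
Definition Wk (d k : nat) (n m : 'I_d -> nat) : R := Wv n (cube_point k m).

Definition Rk (d k : nat) : Gd d -> R := Wv (fun _ => (2 ^ k)%N).

Definition kdelta (d : nat) (p m : 'I_d -> nat) : R := if asbool (p = m) then 1 else 0.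
Definition Ind (P : Prop) : R := if asbool P then 1 else 0.

(* A quasimeasure is given by its values tau k m on the cubes of rank k.
   Integral over the cube of rank r, index m, of W_n: computed at rank
   k = r + max_l n^l (which is >= r and satisfies n < 2^k 1). *)
Definition hat_rank (d : nat) (n : 'I_d -> nat) (r : nat) : nat :=
  (r + \max_(l < d) n l)%N.

Definition hat (d : nat) (tau : nat -> ('I_d -> nat) -> R)
    (n : 'I_d -> nat) (r : nat) (m : 'I_d -> nat) : R :=
  let k := hat_rank n r in
  \sum_(m' : {ffun 'I_d -> 'I_(2 ^ k)} |
          asbool (cube k (fun l => val (m' l)) `<=` cube r m))
     Wk k n (fun l => val (m' l)) * tau k (fun l => val (m' l)).

Definition hat_full (d : nat) (tau : nat -> ('I_d -> nat) -> R) (n : 'I_d -> nat) : R :=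
  hat tau n 0 (fun _ => 0%N).

Definition meets (d : nat) (E : set (Gd d)) (k : nat) (m : 'I_d -> nat) : Prop :=
  cube k m `&` E !=set0.

Definition nchildren (d : nat) (E : set (Gd d)) (k : nat) (m : 'I_d -> nat) : nat :=
  #|[set sg : {ffun 'I_d -> bool} |
      asbool (meets E k.+1 (fun l => (2 * m l + sg l)%N))]|.

Fixpoint tauE (d : nat) (E : set (Gd d)) (k : nat) (m : 'I_d -> nat) : R :=
  match k with
  | 0 => 1
  | k'.+1 =>
      if asbool (meets E k m)
      then tauE E k' (fun l => (m l %/ 2)%N) / (nchildren E k' (fun l => (m l %/ 2)%N))%:R
      else 0
  end.

End Walsh.

(* m_1 = 0, m_{s+1} = 2(2 m_s + 1); (ms 0 is an unused dummy value) *)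
Fixpoint ms (s : nat) : nat :=
  match s with
  | 0 => 0
  | 1 => 0
  | s'.+1 => (2 * (2 * ms s' + 1))%N
  end.

Section Sets.
Variable R : realType.
Variable d : nat.

Definition Fs (s : nat) : set (Gd d) :=
  [set g | exists m m' : 'I_d -> nat,
     [/\ forall l, (m l < 2 ^ ms s)%N, forall l, (m' l < 2 ^ ms s)%N,
         cube (2 * ms s) (fun l => (2 ^ ms s * m l + m' l)%N) g &
         @Rk R d (2 * ms s) g = Wk R (ms s) m m']].

Definition Ftilde (s : nat) : set (Gd d) :=
  [set g | forall k, (1 <= k <= s)%N -> Fs k g].

Definition Fset : set (Gd d) := [set g | forall s, (1 <= s)%N -> Fs s g].

End Sets.

(* Main.v *)
Require Import Defs.
From HB Require Import structures.
From mathcomp Require Import all_boot all_order all_algebra.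
From mathcomp Require Import boolp classical_sets reals.
Import Order.TTheory GRing.Theory Num.Theory.
Local Open Scope classical_set_scope.
Local Open Scope ring_scope.
From mathcomp Require Import zify ring lra.
Import Defs.
Set Implicit Arguments. Unset Strict Implicit. Unset Printing Implicit Defensive.

Local Close Scope ring_scope.
Local Close Scope classical_set_scope.


Lemma bit0n m : bit m 0 = odd m.
Proof. by rewrite /bit expn0 divn1. Qed.

Lemma bitS m k : bit m k.+1 = bit (m %/ 2) k.
Proof. by rewrite /bit expnS divnMA. Qed.

Lemma bit_big m k t : (m < 2 ^ k)%N -> (k <= t)%N -> bit m t = false.
Proof.
move=> hm hkt; rewrite /bit divn_small //; apply: (leq_trans hm).
by rewrite leq_exp2l.
Qed.

Lemma bit_ext k m1 m2 : (m1 < 2 ^ k)%N -> (m2 < 2 ^ k)%N ->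
  (forall t, (t < k)%N -> bit m1 t = bit m2 t) -> m1 = m2.
Proof.
elim: k m1 m2 => [|k IH] m1 m2 h1 h2 hb.
  by move: h1 h2; rewrite expn0 !ltnS !leqn0 => /eqP-> /eqP->.
rewrite -(odd_double_half m1) -(odd_double_half m2).
have e0 := hb 0%N (ltn0Sn k); rewrite !bit0n in e0.
rewrite e0 (IH (m1./2) (m2./2)) //.
- rewrite -divn2 ltn_divLR //; move: h1; rewrite expnS; lia.
- rewrite -divn2 ltn_divLR //; move: h2; rewrite expnS; lia.
- move=> t ht; have := hb t.+1; rewrite !bitS -!divn2 => ->//.
Qed.

Lemma bit_addmul c a b t : (a < 2 ^ c)%N ->
  bit (a + 2 ^ c * b) t = if (t < c)%N then bit a t else bit b (t - c).
Proof.
elim: c a t => [|c IH] a t ha.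
  by move: ha; rewrite expn0 ltnS leqn0 => /eqP->; rewrite add0n mul1n subn0.
case: t => [|t].
  by rewrite !bit0n /= oddD expnS -mulnA oddM /= addbF.
rewrite !bitS expnS -mulnA [(2 * _)%N]mulnC divnDMl // IH; last by rewrite ltn_divLR //; move: ha; rewrite expnS; lia.
by rewrite ltnS subSS -bitS.
Qed.

Lemma bit_pow c t : bit (2 ^ c) t = (t == c).
Proof.
have := @bit_addmul c 0 1 t (expn_gt0 2 c); rewrite add0n muln1 => ->.
case: ltnP => h; first by rewrite /bit div0n /=; apply/esym/eqP; lia.
rewrite /bit; case: (t - c)%N (subnK h) => [|u] e.
  by rewrite expn0 divn1 /=; apply/esym/eqP; lia.
rewrite divn_small ?(ltn_exp2l 0) //=; apply/esym/eqP; lia.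
Qed.

Lemma half_child x (b : bool) : ((2 * x + b) %/ 2 = x)%N.
Proof. by case: b; rewrite /= ?addn0 ?addn1; lia. Qed.

Local Open Scope classical_set_scope.


Section Cubes.
Variable d : nat.
Implicit Types (g h : Gd d) (m a : 'I_d -> nat).

Lemma cubeS k m g : cube k.+1 m g <->
  cube k (fun l => m l %/ 2)%N g /\ forall l, g l k = odd (m l).
Proof.
split.
  move=> h; split; last by move=> l; rewrite h // (_ : (k.+1 - 1 - k = 0)%N) ?bit0n //; lia.
  move=> l t ht; rewrite h; last by lia.
  by rewrite (_ : (k.+1 - 1 - t = (k - 1 - t).+1)%N) ?bitS //; lia.
case=> h1 h2 l t; rewrite ltnS leq_eqVlt => /orP[/eqP->|ht].
  by rewrite h2 (_ : (k.+1 - 1 - k = 0)%N) ?bit0n //; lia.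
by rewrite h1 // (_ : (k.+1 - 1 - t = (k - 1 - t).+1)%N) ?bitS //; lia.
Qed.

Lemma cube_local k m g g' : (forall l t, (t < k)%N -> g l t = g' l t) ->
  cube k m g -> cube k m g'.
Proof. by move=> e h l t ht; rewrite -e // h. Qed.

Lemma cube_point_in k m : cube k m (cube_point k m).
Proof. by move=> l t ht; rewrite /cube_point ht. Qed.

Lemma cube_agree k m g g' : cube k m g -> cube k m g' ->
  forall l t, (t < k)%N -> g l t = g' l t.
Proof. by move=> h h' l t ht; rewrite h // h'. Qed.

Lemma cube_uniq k m1 m2 g : (forall l, (m1 l < 2 ^ k)%N) -> (forall l, (m2 l < 2 ^ k)%N) ->
  cube k m1 g -> cube k m2 g -> m1 = m2.
Proof.
move=> b1 b2 h1 h2; apply: funext => l; apply: (bit_ext (b1 l) (b2 l)) => t ht.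
have e1 := h1 l (k - 1 - t)%N; have e2 := h2 l (k - 1 - t)%N.
have -> : t = (k - 1 - (k - 1 - t))%N by lia.
by rewrite -e1 ?e2 //; lia.
Qed.

Lemma cube_exists k g : exists m, (forall l, (m l < 2 ^ k)%N) /\ cube k m g.
Proof.
elim: k => [|k [m [hm hc]]].
  by exists (fun _ => 0%N); split => // l t.
exists (fun l => 2 * m l + g l k)%N; split.
  by move=> l; have := hm l; rewrite expnS; case: (g l k); lia.
apply/cubeS; split.
  have -> : (fun l => (2 * m l + g l k) %/ 2)%N = m.
    by apply: funext => l; case: (g l k); rewrite /= ?addn0 ?addn1; lia.
  done.
by move=> l; rewrite oddD oddM /=; case: (g l k).
Qed.

Lemma cube_div r t a : cube (r + t) a `<=` cube r (fun l => a l %/ 2 ^ t)%N.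
Proof.
move=> g h l u hu; rewrite h; last by lia.
rewrite /bit -divnMA -expnD; congr (odd (_ %/ 2 ^ _)); lia.
Qed.

Lemma sub_iff r t a m : (forall l, (m l < 2 ^ r)%N) -> (forall l, (a l < 2 ^ (r + t))%N) ->
  (cube (r + t) a `<=` cube r m <-> (fun l => a l %/ 2 ^ t)%N = m).
Proof.
move=> hm ha; split; last by move=> <-; apply: cube_div.
move=> hs; apply: (@cube_uniq r _ _ (cube_point (r + t) a)) => //.
- by move=> l; rewrite ltn_divLR ?expn_gt0 // -expnD.
- by apply: cube_div; apply: cube_point_in.
- by apply: hs; apply: cube_point_in.
Qed.

Lemma sub_step r k a m : (r <= k)%N ->
  (cube k.+1 a `<=` cube r m <-> cube k (fun l => a l %/ 2)%N `<=` cube r m).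
Proof.
move=> hrk; split=> hs g hg.
  pose g' : Gd d := fun l t => if t == k then odd (a l) else g l t.
  have hg' : cube k.+1 a g'.
    apply/cubeS; split.
      by apply: cube_local hg => l t ht; rewrite /g' ifN //; lia.
    by move=> l; rewrite /g' eqxx.
  apply: cube_local (hs _ hg') => l t ht; rewrite /g' ifN //; lia.
by apply: hs; case/cubeS: hg.
Qed.

End Cubes.

Local Open Scope ring_scope.


Section Walsh1.
Variable R : realType.

Definition sgn (b : bool) : R := if b then -1 else 1.

Lemma sgn_sq b : sgn b ^+ 2 = 1.
Proof. by case: b; rewrite /sgn ?sqrrN expr1n. Qed.

Lemma W_ext n (g : Gdy) K1 K2 : (K1 <= K2)%N -> (forall t, (K1 <= t)%N -> bit n t = false) ->
  \prod_(t < K1) (if g t && bit n t then -1 else 1 : R) =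
  \prod_(t < K2) (if g t && bit n t then -1 else 1 : R).
Proof.
move=> hK hb; rewrite -!(big_mkord xpredT (fun t => if g t && bit n t then -1 else 1 : R)).
rewrite (big_cat_nat (leq0n K1) hK) /= [X in _ = _ * X]big1_seq ?mulr1 //.
by move=> t /andP[_]; rewrite mem_index_iota => /andP[h _]; rewrite hb // andbF.
Qed.

Lemma W_range n K (g : Gdy) : (n < 2 ^ K)%N ->
  W R n g = \prod_(t < K) (if g t && bit n t then -1 else 1).
Proof.
move=> hn; rewrite /W; case: (leqP n K) => h.
  apply: W_ext => // t ht; apply: (bit_big (ltn_expl n (ltnSn 1)) ht).
symmetry; apply: W_ext; first exact: ltnW.
by move=> t ht; apply: bit_big hn ht.
Qed.

Lemma W_agree n K (g g' : Gdy) : (n < 2 ^ K)%N -> (forall t, (t < K)%N -> g t = g' t) ->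
  W R n g = W R n g'.
Proof.
by move=> hn e; rewrite !(W_range _ hn); apply: eq_bigr => t _; rewrite e.
Qed.

Lemma W_sq n (g : Gdy) : W R n g ^+ 2 = 1.
Proof.
rewrite /W -prodrXl; apply: big1 => t _; case: ifP => _; by rewrite ?sqrrN expr1n.
Qed.

Lemma Wv_sq d n (g : Gd d) : Wv R n g ^+ 2 = 1.
Proof. by rewrite /Wv -prodrXl; apply: big1 => l _; rewrite W_sq. Qed.

Lemma W_pow c (h : Gdy) : W R (2 ^ c) h = sgn (h c).
Proof.
rewrite (@W_range _ c.+1) ?ltn_exp2l // big_ord_recr /= big1 ?mul1r.
  by rewrite bit_pow eqxx andbT.
by move=> t _; rewrite bit_pow (ltn_eqF (ltn_ord t)) andbF.
Qed.

Lemma Rk_eq d c (g : Gd d) : @Rk R d c g = \prod_(l < d) sgn (g l c).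
Proof. by rewrite /Rk /Wv; apply: eq_bigr => l _; rewrite W_pow. Qed.

End Walsh1.


Lemma bound2 r t x y : (x < 2 ^ r)%N -> (y < 2 ^ t)%N -> (2 ^ t * x + y < 2 ^ (r + t))%N.
Proof.
move=> hx hy; rewrite expnD; move: (2 ^ r)%N (2 ^ t)%N hx hy => A B hx hy.
have : (B * x.+1 <= B * A)%N by rewrite leq_mul2l hx orbT.
lia.
Qed.

Lemma split_uniq D x1 y1 x2 y2 : (y1 < D)%N -> (y2 < D)%N ->
  (D * x1 + y1 = D * x2 + y2)%N -> x1 = x2 /\ y1 = y2.
Proof.
move=> h1 h2 e.
have e1 := congr1 (fun z => z %/ D)%N e; have e2 := congr1 (fun z => z %% D)%N e.
move: e1 e2 => /=; rewrite ![(D * _)%N]mulnC !divnMDl ?modnMDl ?divn_small ?modn_small //;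
  try lia.
Qed.

Lemma msS s : (1 <= s)%N -> ms s.+1 = (2 * (2 * ms s + 1))%N.
Proof. by case: s. Qed.

Lemma ms_lt i j : (1 <= i)%N -> (i < j)%N -> (ms i < ms j)%N.
Proof.
move=> hi; elim: j => // j IH; rewrite ltnS leq_eqVlt => /orP[/eqP<-|h].
  rewrite msS //; lia.
have := IH h; rewrite msS; lia.
Qed.

Lemma ms_le i j : (1 <= i)%N -> (i <= j)%N -> (ms i <= ms j)%N.
Proof. move=> hi; rewrite leq_eqVlt => /orP[/eqP->//|h]; exact/ltnW/ms_lt. Qed.

Lemma ms_inj i j : (1 <= i)%N -> (1 <= j)%N -> ms i = ms j -> i = j.
Proof.
move=> hi hj e; case: (ltngtP i j) => // h.
  by have := ms_lt hi h; rewrite e ltnn.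
by have := ms_lt hj h; rewrite e ltnn.
Qed.

Lemma pos_lt j s : (1 <= j)%N -> (j < s)%N -> (2 * ms j < ms s)%N.
Proof.
move=> hj hs; have := ms_le (leq_trans hj (leqnSn j)) hs; rewrite msS //; lia.
Qed.

Section FsSec.
Variable R : realType.
Variable d : nat.
Implicit Types (g h : Gd d) (m a : 'I_d -> nat).

Definition flip g (l0 : 'I_d) c : Gd d :=
  fun l t => if (l == l0) && (t == c) then ~~ g l t else g l t.

Lemma Rk_flip g l0 c : @Rk R d c (flip g l0 c) = - @Rk R d c g.
Proof.
rewrite !Rk_eq (bigD1 l0) //= [in RHS](bigD1 l0) //= /flip !eqxx /=.
rewrite -mulNr; congr (_ * _); first by rewrite /sgn; case: (g l0 c); rewrite ?opprK.
by apply: eq_bigr => l /negPf ->.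
Qed.

Lemma Fs_local j g g' : (forall l t, (t <= 2 * ms j)%N -> g l t = g' l t) ->
  Fs R j g -> Fs R j g'.
Proof.
move=> e [m [m' [hm hm' hc he]]]; exists m, m'; split => //.
  by apply: cube_local hc => l t ht; apply: e; lia.
by rewrite -he !Rk_eq; apply: eq_bigr => l _; rewrite e.
Qed.

Lemma Fs_iff j g a b : (forall l, (a l < 2 ^ ms j)%N) -> (forall l, (b l < 2 ^ ms j)%N) ->
  cube (2 * ms j)%N (fun l => 2 ^ ms j * a l + b l)%N g ->
  (Fs R j g <-> @Rk R d (2 * ms j)%N g = Wk R (ms j) a b).
Proof.
move=> ha hb hc; split; last by move=> e; exists a, b.
case=> [a' [b' [ha' hb' hc' he]]].
have bnd : forall x y : 'I_d -> nat, (forall l, (x l < 2 ^ ms j)%N) -> (forall l, (y l < 2 ^ ms j)%N) ->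
  forall l, (2 ^ ms j * x l + y l < 2 ^ (2 * ms j))%N.
  by move=> x y hx hy l; rewrite mul2n -addnn; apply: bound2.
have := cube_uniq (bnd _ _ ha' hb') (bnd _ _ ha hb) hc' hc => e.
have ea : a' = a by apply: funext => l; have := congr1 (fun f => f l) e => /= /split_uniq; case => //.
have eb : b' = b by apply: funext => l; have := congr1 (fun f => f l) e => /= /split_uniq; case => //.
by rewrite -ea -eb.
Qed.

Lemma Fs_or j g l0 : Fs R j g \/ Fs R j (flip g l0 (2 * ms j)%N).
Proof.
have [u [hu hc]] := cube_exists (2 * ms j)%N g.
pose a := fun l => (u l %/ 2 ^ ms j)%N; pose b := fun l => (u l %% 2 ^ ms j)%N.
have ha : forall l, (a l < 2 ^ ms j)%N.
  by move=> l; rewrite /a ltn_divLR ?expn_gt0 // -expnD addnn -mul2n.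
have hb : forall l, (b l < 2 ^ ms j)%N by move=> l; rewrite /b ltn_mod expn_gt0.
have eu : u = (fun l => 2 ^ ms j * a l + b l)%N.
  by apply: funext => l; rewrite /a /b mulnC -divn_eq.
rewrite eu in hc.
have hc' : cube (2 * ms j)%N (fun l => 2 ^ ms j * a l + b l)%N (flip g l0 (2 * ms j)%N).
  by apply: cube_local hc => l t ht; rewrite /flip (ltn_eqF ht) andbF.
rewrite (Fs_iff ha hb hc) (Fs_iff ha hb hc') Rk_flip.
have [e|ne] := eqVneq (@Rk R d (2 * ms j)%N g) (Wk R (ms j) a b); [by left|right].
have s1 := Wv_sq R (fun _ : 'I_d => (2 ^ (2 * ms j))%N) g.
have s2 := Wv_sq R a (cube_point (ms j) b).
rewrite /Rk /Wk in ne *.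
move: ne s1 s2; set x := Wv _ _ _; set y := Wv _ _ _ => ne s1 s2.
have e2 : (x - y) * (x + y) = x ^+ 2 - y ^+ 2 by ring.
have : (x - y) * (x + y) = 0 by rewrite e2 s1 s2 subrr.
move/eqP; rewrite mulf_eq0 subr_eq0 (negPf ne) /= addr_eq0 => /eqP ->; by rewrite opprK.
Qed.

End FsSec.


Section Ext.
Variable R : realType.
Variable d : nat.
Variable l0 : 'I_d.
Implicit Types (g h : Gd d) (m a : 'I_d -> nat).

Definition step k h i : Gd d :=
  if asbool (exists j, [/\ (1 <= j)%N, (2 * ms j)%N = i, (k <= i)%N & ~ Fs R j h])
  then flip h l0 i else h.

Fixpoint seqh k h i : Gd d :=
  match i with 0 => h | i'.+1 => step k (seqh k h i') i' end.

Lemma step_other k h i l t : t != i -> step k h i l t = h l t.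
Proof. by move=> ne; rewrite /step; case: asboolP => // _; rewrite /flip (negPf ne) andbF. Qed.

Lemma seqh_stable k h i u l t : (t < i)%N -> seqh k h (i + u) l t = seqh k h i l t.
Proof.
move=> ht; elim: u => [|u IH]; first by rewrite addn0.
by rewrite addnS /= step_other ?IH //; apply/eqP; lia.
Qed.

Lemma seqh_low k h i l t : (t < k)%N -> seqh k h i l t = h l t.
Proof.
move=> ht; elim: i => //= i IH; rewrite /step; case: asboolP => [ex|_] //.
case: ex => j [_ e hk _].
by rewrite /flip ifN ?IH //; apply/negP => /andP[_ /eqP e']; lia.
Qed.

Definition gext k h : Gd d := fun l t => seqh k h t.+1 l t.

Lemma gext_agree k h i l t : (t < i)%N -> gext k h l t = seqh k h i l t.
Proof.
move=> ht; rewrite /gext -(subnKC ht) seqh_stable //.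
Qed.

Lemma ext k h : (forall j, (1 <= j)%N -> (2 * ms j < k)%N -> Fs R j h) ->
  Fset R (gext k h) /\ forall l t, (t < k)%N -> gext k h l t = h l t.
Proof.
move=> hF; split; last by move=> l t ht; rewrite /gext seqh_low.
move=> j hj; set c := (2 * ms j)%N.
apply: (@Fs_local R d j (seqh k h c.+1)).
  by move=> l t ht; rewrite (gext_agree _ _ (i := c.+1)).
case: (ltnP c k) => hck.
  apply: (@Fs_local R d j h); last exact: hF.
  by move=> l t ht; rewrite seqh_low //; lia.
rewrite /= /step; case: asboolP => [ex|nex].
  case: ex => j' [hj' e' _ nF].
  have ejj : j' = j by apply: ms_inj => //; rewrite /c in e'; lia.
  subst j'; have [hf|//] := Fs_or R j (seqh k h c) l0.
  by exfalso; apply: nF.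
have [//|nf] := pselect (Fs R j (seqh k h c)).
by exfalso; apply: nex; exists j; split.
Qed.

End Ext.

Local Close Scope classical_set_scope.


Lemma half_pow x e : (0 < e)%N -> (x + x = 2 ^ e)%N -> x = (2 ^ e.-1)%N.
Proof. by case: e => // e _; rewrite expnS /=; lia. Qed.

Section Count.
Variable R : realType.
Variable d : nat.
Variable l0 : 'I_d.

Definition sprod (σ : {ffun 'I_d -> bool}) : R := \prod_(l < d) sgn R (σ l).

Lemma sq_pm (x v : R) : x ^+ 2 = 1 -> v ^+ 2 = 1 -> (x == v) || (x == - v).
Proof.
move=> hx hv.
have e2 : (x - v) * (x + v) = x ^+ 2 - v ^+ 2 by ring.
have : (x - v) * (x + v) == 0 by rewrite e2 hx hv subrr.
by rewrite mulf_eq0 subr_eq0 addr_eq0.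
Qed.

Lemma sprod_sq σ : sprod σ ^+ 2 = 1.
Proof. by rewrite /sprod -prodrXl; apply: big1 => l _; rewrite sgn_sq. Qed.

Lemma count_half (v : R) : v ^+ 2 = 1 ->
  #|[set σ : {ffun 'I_d -> bool} | sprod σ == v]| = (2 ^ d.-1)%N.
Proof.
move=> hv.
pose fl (σ : {ffun 'I_d -> bool}) := [ffun l => if l == l0 then ~~ σ l else σ l].
have flK : involutive fl.
  by move=> σ; apply/ffunP => l; rewrite !ffunE; case: eqP => //; rewrite negbK.
have flP σ : sprod (fl σ) = - sprod σ.
  rewrite /sprod (bigD1 l0) //= [in RHS](bigD1 l0) //= !ffunE eqxx -mulNr.
  congr (_ * _); first by rewrite /sgn; case: (σ l0); rewrite ?opprK.
  by apply: eq_bigr => l /negPf hl; rewrite ffunE hl.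
have vne : v != - v.
  by case/orP: (sq_pm hv (expr1n R 2)) => /eqP ->; apply/eqP; lra.
set A := [set σ | sprod σ == v].
have eC : [predC A] =i [set σ | sprod σ == - v].
  move=> σ; rewrite /A !inE.
  by case/orP: (sq_pm (sprod_sq σ) hv) => /eqP ->; [rewrite eqxx (negPf vne) | rewrite eqxx eq_sym vne].
have cA : #|[predC A]| = #|A|.
  rewrite (eq_card eC) -(card_imset _ (inv_inj flK)).
  apply: eq_card => σ; apply/imsetP/idP.
    by case=> τ; rewrite !inE => /eqP hτ ->; rewrite flP hτ opprK.
  rewrite inE => /eqP hσ; exists (fl σ); last by rewrite flK.
  by rewrite inE flP hσ.
have := cardC A; rewrite cA card_ffun card_bool card_ord.
apply: half_pow; exact: (leq_ltn_trans (leq0n _) (ltn_ord l0)).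
Qed.

End Count.

Local Open Scope classical_set_scope.


Definition isPos (i : nat) := exists j, (1 <= j)%N /\ (2 * ms j)%N = i.

Lemma cube_split d c (g : Gd d) : exists a b : 'I_d -> nat,
  [/\ forall l, (a l < 2 ^ c)%N, forall l, (b l < 2 ^ c)%N &
      cube (2 * c)%N (fun l => 2 ^ c * a l + b l)%N g].
Proof.
have [u [hu hc]] := cube_exists (2 * c)%N g.
exists (fun l => (u l %/ 2 ^ c)%N), (fun l => (u l %% 2 ^ c)%N); split.
- by move=> l; rewrite ltn_divLR ?expn_gt0 // -expnD addnn -mul2n.
- by move=> l; rewrite ltn_mod expn_gt0.
- have <- // : u = (fun l => 2 ^ c * (u l %/ 2 ^ c) + u l %% 2 ^ c)%N.
  by apply: funext => l; rewrite mulnC -divn_eq.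
Qed.


Lemma child_div d (a : 'I_d -> nat) (σ : {ffun 'I_d -> bool}) :
  (fun l => (2 * a l + σ l) %/ 2)%N = a.
Proof. by apply: funext => l; case: (σ l); rewrite /= ?addn0 ?addn1; lia. Qed.

Lemma child_sub d k (a : 'I_d -> nat) (σ : {ffun 'I_d -> bool}) :
  cube k.+1 (fun l => 2 * a l + σ l)%N `<=` cube k a.
Proof. by move=> g /cubeS [+ _]; rewrite child_div. Qed.

Lemma child_point d k (a : 'I_d -> nat) (σ : {ffun 'I_d -> bool}) l :
  cube_point k.+1 (fun l => 2 * a l + σ l)%N l k = σ l.
Proof.
rewrite /cube_point ltnSn /= (_ : (k.+1 - 1 - k = 0)%N) ?bit0n; last by lia.
by rewrite oddD oddM /=; case: (σ l).
Qed.

Section Meets.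
Variable R : realType.
Variable d : nat.
Variable l0 : 'I_d.
Implicit Types (g h : Gd d) (m a : 'I_d -> nat).
Local Notation F := (@Fset R d).

Lemma Fne : exists g, F g.
Proof.
have [|h _] := @ext R d l0 0 (fun _ _ => false); first by move=> j _; rewrite ltn0.
by eexists; exact: h. Qed.

Lemma meets_iff k a h : cube k a h ->
  (meets F k a <-> forall j, (1 <= j)%N -> (2 * ms j < k)%N -> Fs R j h).
Proof.
move=> hh; split.
  case=> g [hg hF] j hj hjk; apply: (Fs_local (g := g)); last exact: hF.
  move=> l t ht; apply: (cube_agree hg hh); lia.
move=> hF; have [hg ha] := @ext R d l0 _ _ hF.
exists (gext R l0 k h); split => //.
by apply: cube_local hh => l t ht; rewrite ha.
Qed.

Lemma nchildren_card k a : nchildren F k a =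
  #|[pred σ : {ffun 'I_d -> bool} | asbool (meets F k.+1 (fun l => 2 * a l + σ l)%N)]|.
Proof.
apply: eq_card => σ; rewrite !inE /=.
apply/idP/idP; first by move/asboolP.
by move=> h; apply/asboolP.
Qed.

Lemma child_meets k a (σ : {ffun 'I_d -> bool}) : meets F k a ->
  (meets F k.+1 (fun l => 2 * a l + σ l)%N <->
   forall j, (1 <= j)%N -> (2 * ms j)%N = k ->
     Fs R j (cube_point k.+1 (fun l => 2 * a l + σ l)%N)).
Proof.
move=> hm; set h := cube_point _ _.
have hh : cube k.+1 (fun l => 2 * a l + σ l)%N h by apply: cube_point_in.
have hk : cube k a h by apply: child_sub hh.
rewrite (meets_iff hh); have := (meets_iff hk).1 hm => hlow.
split; first by move=> H j hj e; apply: H => //; lia.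
move=> H j hj; rewrite ltnS leq_eqVlt => /orP[/eqP e|lt]; first exact: H.
exact: hlow.
Qed.

Lemma nchildren_val k a : meets F k a ->
  nchildren F k a = if asbool (isPos k) then (2 ^ d.-1)%N else (2 ^ d)%N.
Proof.
move=> hm; rewrite nchildren_card; case: asboolP => [[j [hj e]]|np].
  have [a' [b' [ha hb hc]]] := cube_split (ms j) (cube_point k a).
  rewrite -(count_half l0 (Wv_sq R a' (cube_point (ms j) b'))).
  apply: eq_card => σ; rewrite !inE /=.
  apply/idP/idP => [/asboolP H|/eqP H]; last first.
    apply/asboolP; apply/(child_meets _ hm) => j' hj' e'.
    have ejj : j' = j by apply: ms_inj => //; lia.
    subst j'.
    have hc' : cube (2 * ms j)%N (fun l => 2 ^ ms j * a' l + b' l)%N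
                 (cube_point k.+1 (fun l => 2 * a l + σ l)%N).
      apply: cube_local hc => l t ht; rewrite /cube_point; rewrite e in ht.
      rewrite ht (ltn_trans ht (ltnSn k)) /= (_ : (k.+1 - 1 - t = (k - 1 - t).+1)%N) ?bitS ?half_child //; lia.
    apply/(Fs_iff R ha hb hc'); rewrite Rk_eq /Wk -H /sprod; apply: eq_bigr => l _.
    by rewrite e child_point.
  have := (child_meets _ hm).1 H j hj e.
  have hc' : cube (2 * ms j)%N (fun l => 2 ^ ms j * a' l + b' l)%N
               (cube_point k.+1 (fun l => 2 * a l + σ l)%N).
    apply: cube_local hc => l t ht; rewrite /cube_point; rewrite e in ht.
    rewrite ht (ltn_trans ht (ltnSn k)) /= (_ : (k.+1 - 1 - t = (k - 1 - t).+1)%N) ?bitS ?half_child //; lia.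
  move/(Fs_iff R ha hb hc'); rewrite Rk_eq /sprod /Wk => <-; apply/eqP; apply: eq_bigr => l _.
  by rewrite e child_point.
have -> : (2 ^ d)%N = #|{ffun 'I_d -> bool}| by rewrite card_ffun card_bool card_ord.
apply: eq_card => σ; rewrite !inE /=.
apply/asboolP/(child_meets _ hm) => j hj e; exfalso; apply: np; by exists j.
Qed.

End Meets.


Section Tau.
Variable R : realType.
Variable d : nat.
Variable l0 : 'I_d.
Local Notation F := (@Fset R d).

Fixpoint cst k : R := match k with
  | 0 => 1
  | k'.+1 => cst k' / ((if asbool (isPos k') then (2 ^ d.-1)%N else (2 ^ d)%N)%:R)
  end.

Lemma tau_val k a : tauE R F k a = if asbool (meets F k a) then cst k else 0.
Proof.
elim: k a => [|k IH] a /=.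
  case: asboolP => // nm; exfalso; apply: nm.
  have [g hg] := Fne R l0; by exists g; split => // l t.
case: asboolP => // hm.
have hm' : meets F k (fun l => (a l %/ 2)%N).
  by case: hm => g [hg hF]; exists g; split => //; case/cubeS: hg.
by rewrite IH (nchildren_val l0 hm'); case: asboolP.
Qed.

Lemma tau_add k a : \sum_(σ : {ffun 'I_d -> bool}) tauE R F k.+1 (fun l => 2 * a l + σ l)%N
  = tauE R F k a.
Proof.
under eq_bigr => σ _ do rewrite tau_val.
rewrite -big_mkcond /=.
transitivity (\sum_(σ in [pred σ : {ffun 'I_d -> bool} | asbool (meets F k.+1 (fun l => 2 * a l + σ l)%N)]) cst k.+1).
  by apply: eq_bigl.
rewrite sumr_const -nchildren_card tau_val.
case: asboolP => hm.
  rewrite /= (nchildren_val l0 hm); set N := (if _ then _ else _)%N.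
  rewrite -(mulr_natr (cst k / N%:R) N) divfK //.
  by rewrite pnatr_eq0 /N; case: asboolP => _; rewrite expn_eq0.
rewrite nchildren_card (_ : #|_| = 0%N) ?mulr0n //.
apply: eq_card0 => σ; rewrite !inE /=; apply/asboolP => hc; apply: hm.
by case: hc => g [hg hF]; exists g; split => //; apply: child_sub hg.
Qed.

End Tau.


Section Reindex.
Variable R : realType.

Lemma sum_ffun_bij (I A B C : finType) (f : B -> C -> A) (g : A -> B * C)
  (fK : forall x y, g (f x y) = (x, y)) (gK : forall a, f (g a).1 (g a).2 = a)
  (G : {ffun I -> A} -> R) :
  \sum_(a : {ffun I -> A}) G a =
  \sum_(x : {ffun I -> B}) \sum_(y : {ffun I -> C}) G [ffun i => f (x i) (y i)].
Proof.
rewrite pair_bigA /=.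
pose h (p : {ffun I -> B} * {ffun I -> C}) : {ffun I -> A} := [ffun i => f (p.1 i) (p.2 i)].
pose h' (a : {ffun I -> A}) := ([ffun i => (g (a i)).1], [ffun i => (g (a i)).2]).
rewrite (reindex h) //=; apply: onW_bij; exists h'.
  case=> x y; rewrite /h /h' /=; congr pair; apply/ffunP => i; rewrite !ffunE fK //.
by move=> a; rewrite /h /h'; apply/ffunP => i; rewrite !ffunE /= gK.
Qed.

Variable d : nat.

Lemma sum_split r t (G : ('I_d -> nat) -> R) :
  \sum_(a : {ffun 'I_d -> 'I_(2 ^ (r + t))}) G (fun l => val (a l)) =
  \sum_(x : {ffun 'I_d -> 'I_(2 ^ r)}) \sum_(y : {ffun 'I_d -> 'I_(2 ^ t)})
     G (fun l => 2 ^ t * x l + y l)%N.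
Proof.
pose f (x : 'I_(2 ^ r)) (y : 'I_(2 ^ t)) : 'I_(2 ^ (r + t)) :=
  Ordinal (bound2 (ltn_ord x) (ltn_ord y)).
have h1 (a : 'I_(2 ^ (r + t))) : (a %/ 2 ^ t < 2 ^ r)%N.
  by rewrite ltn_divLR ?expn_gt0 // -expnD.
have h2 (a : 'I_(2 ^ (r + t))) : (a %% 2 ^ t < 2 ^ t)%N by rewrite ltn_mod expn_gt0.
pose g (a : 'I_(2 ^ (r + t))) := (Ordinal (h1 a), Ordinal (h2 a)).
rewrite (@sum_ffun_bij _ _ _ _ f g).
- apply: eq_bigr => x _; apply: eq_bigr => y _; congr G; apply: funext => l.
  by rewrite ffunE.
- move=> x y; rewrite /g /f /=; congr pair; apply: val_inj => /=.
    by rewrite mulnC divnMDl ?expn_gt0 // divn_small ?addn0.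
  by rewrite mulnC modnMDl modn_small.
- by move=> a; apply: val_inj; rewrite /= mulnC -divn_eq.
Qed.

Lemma sum_splitb k (G : ('I_d -> nat) -> R) :
  \sum_(a : {ffun 'I_d -> 'I_(2 ^ k.+1)}) G (fun l => val (a l)) =
  \sum_(x : {ffun 'I_d -> 'I_(2 ^ k)}) \sum_(σ : {ffun 'I_d -> bool})
     G (fun l => 2 * x l + σ l)%N.
Proof.
have hb (x : 'I_(2 ^ k)) (b : bool) : (2 * x + b < 2 ^ k.+1)%N.
  by have := ltn_ord x; rewrite expnS; case: b; lia.
pose f (x : 'I_(2 ^ k)) (b : bool) : 'I_(2 ^ k.+1) := Ordinal (hb x b).
have h1 (a : 'I_(2 ^ k.+1)) : (a %/ 2 < 2 ^ k)%N.
  by rewrite ltn_divLR // mulnC -expnS.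
pose g (a : 'I_(2 ^ k.+1)) := (Ordinal (h1 a), odd a).
rewrite (@sum_ffun_bij _ _ _ _ f g).
- apply: eq_bigr => x _; apply: eq_bigr => y _; congr G; apply: funext => l.
  by rewrite ffunE.
- move=> x y; rewrite /g /f /=; congr pair; first apply: val_inj => /=.
    by case: y; rewrite /= ?addn0 ?addn1; lia.
  by rewrite oddD oddM /=; case: y.
- move=> a; apply: val_inj; rewrite /= -{3}(odd_double_half a) -divn2; lia.
Qed.

End Reindex.


Section Collapse.
Variable R : realType.
Variable d : nat.
Variable l0 : 'I_d.
Local Notation F := (@Fset R d).
Local Notation tau := (tauE R F).

Lemma Wk_child k n a (σ : {ffun 'I_d -> bool}) : (forall l, (n l < 2 ^ k)%N) ->
  Wk R k.+1 n (fun l => 2 * a l + σ l)%N = Wk R k n a.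
Proof.
move=> hn; rewrite /Wk /Wv; apply: eq_bigr => l _; apply: (W_agree R (hn l)) => t ht.
rewrite /cube_point ht (ltn_trans ht (ltnSn k)) /=.
by rewrite (_ : (k.+1 - 1 - t = (k - 1 - t).+1)%N) ?bitS ?half_child //; lia.
Qed.

Definition Ssum r m n k : R :=
  \sum_(a : {ffun 'I_d -> 'I_(2 ^ k)} |
          asbool (cube k (fun l => val (a l)) `<=` cube r m))
     Wk R k n (fun l => val (a l)) * tau k (fun l => val (a l)).

Lemma collapse r m n k0 k : (r <= k0)%N -> (forall l, (n l < 2 ^ k0)%N) -> (k0 <= k)%N ->
  Ssum r m n k = Ssum r m n k0.
Proof.
move=> hr hn hk; rewrite -(subnKC hk); elim: (k - k0)%N => [|i IH]; first by rewrite addn0.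
rewrite -IH addnS /Ssum big_mkcond.
rewrite (@sum_splitb R d _ (fun a => if asbool (cube (k0 + i).+1 a `<=` cube r m)
   then Wk R (k0 + i).+1 n a * tau (k0 + i).+1 a else 0)) [in RHS]big_mkcond.
apply: eq_bigr => x _.
have hn' : forall l, (n l < 2 ^ (k0 + i))%N.
  by move=> l; apply: (leq_trans (hn l)); rewrite leq_exp2l // leq_addr.
under eq_bigr => σ _ do rewrite (asbool_equiv_eq (sub_step _ _ (leq_trans hr (leq_addr i k0)))) child_div Wk_child //.
case: asboolP => _; last by rewrite big1.
by rewrite -mulr_sumr (tau_add R l0).
Qed.

Lemma sub_sum r t m (G : ('I_d -> nat) -> R) : (forall l, (m l < 2 ^ r)%N) ->
  \sum_(a : {ffun 'I_d -> 'I_(2 ^ (r + t))} |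
          asbool (cube (r + t) (fun l => val (a l)) `<=` cube r m)) G (fun l => val (a l))
  = \sum_(y : {ffun 'I_d -> 'I_(2 ^ t)}) G (fun l => 2 ^ t * m l + y l)%N.
Proof.
move=> hm; rewrite big_mkcond.
rewrite (@sum_split R d _ _ (fun a => if asbool (cube (r + t) a `<=` cube r m) then G a else 0)).
pose mo : {ffun 'I_d -> 'I_(2 ^ r)} := [ffun l => Ordinal (hm l)].
have hb (x : {ffun 'I_d -> 'I_(2 ^ r)}) (y : {ffun 'I_d -> 'I_(2 ^ t)}) l :
  (2 ^ t * x l + y l < 2 ^ (r + t))%N by apply: bound2.
have key (x : {ffun 'I_d -> 'I_(2 ^ r)}) (y : {ffun 'I_d -> 'I_(2 ^ t)}) :
  (cube (r + t) (fun l => 2 ^ t * x l + y l)%N `<=` cube r m) <-> x = mo.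
  rewrite sub_iff //; split.
    move=> e; apply/ffunP => l; apply: val_inj; rewrite ffunE /=.
    have := congr1 (fun f => f l) e => /= <-.
    by rewrite mulnC divnMDl ?expn_gt0 // divn_small ?addn0.
  move=> ->; apply: funext => l; rewrite ffunE /=.
  by rewrite mulnC divnMDl ?expn_gt0 // divn_small ?addn0.
rewrite (bigD1 mo) //= [X in _ + X]big1 ?addr0.
  apply: eq_bigr => y _; case: asboolP => [_|]; last by move=> h; exfalso; apply: h; apply/(key mo y).
  by congr G; apply: funext => l; rewrite ffunE.
move=> x hx; apply: big1 => y _; case: asboolP => // /key e.
by rewrite e eqxx in hx.
Qed.

End Collapse.


Lemma bit_mod p c t : (t < c)%N -> bit (p %% 2 ^ c) t = bit p t.
Proof.
move=> ht; rewrite [in RHS](divn_eq p (2 ^ c)) mulnC addnC bit_addmul ?ltn_mod ?expn_gt0 //.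
by rewrite ht.
Qed.

Section Orth.
Variable R : realType.

Lemma sum_bij (A B C : finType) (f : B -> C -> A) (g : A -> B * C)
  (fK : forall x y, g (f x y) = (x, y)) (gK : forall a, f (g a).1 (g a).2 = a)
  (G : A -> R) :
  \sum_(a : A) G a = \sum_(x : B) \sum_(y : C) G (f x y).
Proof.
rewrite pair_bigA /= (reindex (fun p => f p.1 p.2)) //=; apply: onW_bij; exists g.
  by case=> x y; rewrite fK.
by move=> a; rewrite gK.
Qed.

Lemma sum_splitb1 k (G : nat -> R) :
  \sum_(a : 'I_(2 ^ k.+1)) G a = \sum_(x : 'I_(2 ^ k)) \sum_(b : bool) G (2 * x + b)%N.
Proof.
have hb (x : 'I_(2 ^ k)) (b : bool) : (2 * x + b < 2 ^ k.+1)%N.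
  by have := ltn_ord x; rewrite expnS; case: b; lia.
pose f (x : 'I_(2 ^ k)) (b : bool) : 'I_(2 ^ k.+1) := Ordinal (hb x b).
have h1 (a : 'I_(2 ^ k.+1)) : (a %/ 2 < 2 ^ k)%N.
  by rewrite ltn_divLR // mulnC -expnS.
pose g (a : 'I_(2 ^ k.+1)) := (Ordinal (h1 a), odd a).
rewrite (@sum_bij _ _ _ f g) //.
- move=> x y; rewrite /g /f /=; congr pair; first apply: val_inj => /=.
    by case: y; rewrite /= ?addn0 ?addn1; lia.
  by rewrite oddD oddM /=; case: y.
- move=> a; apply: val_inj; rewrite /= -{3}(odd_double_half a) -divn2; lia.
Qed.

Definition cp1 c u : Gdy := fun t => (t < c)%N && bit u (c - 1 - t).

Lemma W_cp1S c p x (b : bool) : (p < 2 ^ c.+1)%N ->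
  W R p (cp1 c.+1 (2 * x + b)%N) = W R (p %% 2 ^ c) (cp1 c x) * sgn R (b && bit p c).
Proof.
move=> hp; rewrite (@W_range R _ _ _ hp) big_ord_recr /=.
rewrite (@W_range R _ c) ?ltn_mod ?expn_gt0 //; congr (_ * _).
  apply: eq_bigr => t _; rewrite /cp1 ltn_ord (ltn_trans (ltn_ord t) (ltnSn c)) /=.
  rewrite (_ : (c.+1 - 1 - t = (c - 1 - t).+1)%N) ?bitS ?half_child; last by have := ltn_ord t; lia.
  congr (if _ && _ then _ else _); rewrite {1}(divn_eq p (2 ^ c)) addnC mulnC bit_addmul ?ltn_mod ?expn_gt0 //.
  by rewrite ltn_ord.
rewrite /cp1 ltnSn /= (_ : (c.+1 - 1 - c = 0)%N) ?bit0n; last by lia.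
by rewrite oddD oddM /=; case: b.
Qed.

Lemma orth c p m : (p < 2 ^ c)%N -> (m < 2 ^ c)%N ->
  \sum_(u : 'I_(2 ^ c)) W R p (cp1 c u) * W R m (cp1 c u) = (2 ^ c)%:R * (p == m)%:R.
Proof.
elim: c p m => [|c IH] p m hp hm.
  move: hp hm; rewrite expn0 !ltnS !leqn0 => /eqP-> /eqP->.
  rewrite big_ord1 /W !big_ord0 eqxx; by rewrite mulr1.
rewrite (@sum_splitb1 c (fun u => W R p (cp1 c.+1 u) * W R m (cp1 c.+1 u))).
under eq_bigr => x _ do under eq_bigr => b _ do rewrite (W_cp1S _ _ hp) (W_cp1S _ _ hm).
have e1 : forall x : 'I_(2 ^ c), \sum_(b : bool)
   W R (p %% 2 ^ c) (cp1 c x) * sgn R (b && bit p c) * (W R (m %% 2 ^ c) (cp1 c x) * sgn R (b && bit m c))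
   = W R (p %% 2 ^ c) (cp1 c x) * W R (m %% 2 ^ c) (cp1 c x) * (2 * (bit p c == bit m c)%:R).
  move=> x; rewrite big_bool /= /sgn.
  by case: (bit p c); case: (bit m c) => /=; ring.
under eq_bigr => x _ do rewrite e1.
rewrite -mulr_suml IH ?ltn_mod ?expn_gt0 //.
have -> : (p == m) = ((p %% 2 ^ c)%N == (m %% 2 ^ c)%N) && (bit p c == bit m c).
  apply/eqP/andP => [->|[/eqP e /eqP e']]; first by [].
  apply: (bit_ext hp hm) => t; rewrite ltnS leq_eqVlt => /orP[/eqP->|ht]//.
  by have := congr1 (fun z => bit z t) e; rewrite /= !bit_mod.
rewrite expnS natrM; case: (_ == _); case: (_ == _); rewrite /=; ring.
Qed.

End Orth.


Lemma pos_window s i : (1 <= s)%N -> (ms s <= i)%N -> (i < ms s.+1)%N -> isPos i ->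
  i = (2 * ms s)%N.
Proof.
move=> hs h1 h2 [j [hj e]]; subst i.
case: (ltngtP j s) => hjs.
- by have := pos_lt hj hjs; lia.
- have := ms_le (leq_trans hs (leqnSn s)) hjs; lia.
- by rewrite hjs.
Qed.

Section Cst.
Variable R : realType.
Variable d : nat.

Definition e2 (z : int) : R := (2 : R) ^ z.

Lemma e2D a b : e2 (a + b) = e2 a * e2 b.
Proof. by rewrite /e2 expfzDr // pnatr_eq0. Qed.

Lemma natr_pow2 k : ((2 ^ k)%N%:R : R) = e2 k%:Z.
Proof. by rewrite natrX exprnP. Qed.

Lemma div_pow x k : x / ((2 ^ k)%N%:R : R) = x * e2 (- k%:Z).
Proof. by rewrite natr_pow2 /e2 invr_expz. Qed.

Lemma cst_range k t : (forall i, (k <= i)%N -> (i < k + t)%N -> ~ isPos i) ->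
  cst R d (k + t) = cst R d k * e2 (- (d * t)%N%:Z).
Proof.
elim: t => [|t IH] H; first by rewrite addn0 muln0 /e2 expr0z mulr1.
rewrite addnS /= IH; last by move=> i h1 h2; apply: H => //; lia.
case: asboolP => [hp|_]; first by exfalso; apply: (H (k + t)%N) => //; lia.
rewrite div_pow -mulrA -e2D; congr (_ * e2 _); lia.
Qed.

Lemma cst_pos k : isPos k -> cst R d k.+1 = cst R d k * e2 (- (d.-1)%:Z).
Proof. by move=> hp; rewrite /=; case: asboolP => // _; rewrite div_pow. Qed.

Lemma cst_k0 s : (1 <= s)%N ->
  cst R d (ms s + (ms s).+1) = cst R d (ms s) * e2 (- (d * ms s)%N%:Z) * e2 (- (d.-1)%:Z).
Proof.
move=> hs; rewrite addnS cst_pos; last by exists s; split => //; lia.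
rewrite cst_range // => i h1 h2 /(pos_window hs h1); rewrite msS //; lia.
Qed.

Lemma cst_ms s : (1 <= d)%N -> (1 <= s)%N -> cst R d (ms s) = e2 ((s%:Z - 1) - (d * ms s)%N%:Z).
Proof.
move=> hd; elim: s => // s IH hs.
case: (leqP s 0) => h0.
  have -> : s = 0%N by lia.
  by rewrite /= /e2 subrr add0r muln0 oppr0 expr0z.
have hs1 : (1 <= s)%N by lia.
have e : ms s.+1 = ((ms s + (ms s).+1) + (ms s + (ms s).+1))%N by rewrite msS //; lia.
rewrite e cst_range; last first.
  move=> i h1 h2 /(pos_window hs1 _ _).
  rewrite msS //; move=> H; have := H ltac:(lia) ltac:(lia); lia.
rewrite cst_k0 // IH // -!e2D; congr e2.
rewrite -e; lia.
Qed.

End Cst.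


Section BitsX.
Variable c : nat.
Variables (mm yy : nat) (b : bool).
Hypotheses (hy : (yy < 2 ^ c)%N).
Let x := (2 ^ c.+1 * mm + (2 * yy + b))%N.

Lemma hb2 : (2 * yy + b < 2 ^ c.+1)%N.
Proof. by rewrite expnS; case: b; lia. Qed.

Lemma bx_lo t : (t < c)%N -> bit x (c + c.+1 - 1 - t) = bit mm (c - 1 - t).
Proof.
move=> ht; rewrite /x addnC bit_addmul ?hb2 // ifN; last by lia.
by congr bit; lia.
Qed.

Lemma bx_mid u : (u < c)%N -> bit x (c + c.+1 - 1 - (c + u)) = bit yy (c - 1 - u).
Proof.
move=> hu; rewrite /x addnC bit_addmul ?hb2 // ifT; last by lia.
by rewrite (_ : (c + c.+1 - 1 - (c + u) = (c - 1 - u).+1)%N) ?bitS ?half_child //; lia.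
Qed.

Lemma bx_top : bit x (c + c.+1 - 1 - (c + c)) = b.
Proof.
rewrite /x addnC bit_addmul ?hb2 // ifT; last by lia.
rewrite (_ : (c + c.+1 - 1 - (c + c) = 0)%N) ?bit0n; last by lia.
by rewrite oddD oddM /=; case: b.
Qed.

End BitsX.

Section BitsN.
Variable c : nat.
Variables (pp qq : nat).
Hypotheses (hp : (pp < 2 ^ c)%N) (hq : (qq < 2 ^ c)%N).
Let nn := (qq + 2 ^ c * (pp + 2 ^ c * 1))%N.

Lemma hpn : (pp + 2 ^ c * 1 < 2 ^ c.+1)%N.
Proof. by rewrite muln1 expnS; lia. Qed.

Lemma bn_lo t : (t < c)%N -> bit nn t = bit qq t.
Proof. by move=> ht; rewrite /nn bit_addmul // ht. Qed.

Lemma bn_mid u : (u < c)%N -> bit nn (c + u) = bit pp u.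
Proof.
move=> hu; rewrite /nn bit_addmul // ifN; last by lia.
by rewrite bit_addmul // (_ : (c + u - c = u)%N) ?hu //; lia.
Qed.

Lemma bn_top : bit nn (c + c) = true.
Proof.
rewrite /nn bit_addmul // ifN; last by lia.
rewrite bit_addmul // (_ : (c + c - c = c)%N) ?ltnn ?subnn; last by lia.
by rewrite /bit expn0 divn1.
Qed.

Lemma nn_bound : (nn < 2 ^ (c + c.+1))%N.
Proof. by have := bound2 hpn hq; rewrite /nn addnC [(c.+1 + c)%N]addnC. Qed.

End BitsN.

Section WMain.
Variable c : nat.
Variables (mm yy pp qq : nat) (b : bool).
Hypotheses (hy : (yy < 2 ^ c)%N) (hp : (pp < 2 ^ c)%N) (hq : (qq < 2 ^ c)%N).
Let x := (2 ^ c.+1 * mm + (2 * yy + b))%N.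
Let nn := (qq + 2 ^ c * (pp + 2 ^ c * 1))%N.

Lemma W_main (R : realType) :
  W R nn (cp1 (c + c.+1) x) = W R qq (cp1 c mm) * W R pp (cp1 c yy) * sgn R b.
Proof.
rewrite (@W_range R _ _ _ (nn_bound hp hq)) (@W_range R qq c) // (@W_range R pp c) //.
rewrite big_split_ord /= big_ord_recr /= -mulrA; congr (_ * _).
  apply: eq_bigr => t _; rewrite /cp1 /= ltn_ord (ltn_addr _ (ltn_ord t)) bx_lo ?bn_lo //.

congr (_ * _).
  apply: eq_bigr => u _; rewrite /cp1 /= ltn_ord.
  by rewrite ltn_add2l (ltn_trans (ltn_ord u) (ltnSn c)) /= bx_mid ?bn_mid.
by rewrite /cp1 /= ltn_add2l ltnSn /= bx_top ?bn_top ?andbT.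
Qed.

End WMain.


Section Main.
Variable R : realType.
Variable d : nat.
Variable l0 : 'I_d.
Variable s : nat.
Hypothesis hs : (1 <= s)%N.
Local Notation F := (@Fset R d).
Local Notation c := (ms s).
Local Notation k0 := (ms s + (ms s).+1)%N.

Definition Vm (m : 'I_d -> nat) :=
  forall j, (1 <= j)%N -> (2 * ms j < c)%N -> Fs R j (cube_point c m).

Lemma V_iff m : (cube c m `<=` Ftilde R (s - 1)) <-> Vm m.
Proof.
split.
  move=> H j hj hjc; have := H _ (@cube_point_in d c m); rewrite /Ftilde /= => HF.
  apply: HF; apply/andP; split => //.
  case: (ltnP j s) => h; first by lia.
  by have := ms_le hs h; lia.
move=> H g hg; rewrite /Ftilde /= => k /andP[hk1 hk2].
have hks : (k < s)%N by lia.
have := pos_lt hk1 hks => hlt.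
apply: (Fs_local (g := cube_point c m)); last exact: H.
by move=> l t ht; apply: (cube_agree (@cube_point_in d c m) hg); lia.
Qed.

Variables (m y : 'I_d -> nat) (σ : {ffun 'I_d -> bool}).
Hypotheses (hm : forall l, (m l < 2 ^ c)%N) (hy : forall l, (y l < 2 ^ c)%N).
Let x := (fun l => 2 ^ c.+1 * m l + (2 * y l + σ l))%N.

Lemma meets_main : meets F k0 x <-> Vm m /\ sprod R σ = Wk R c m y.
Proof.
set h := cube_point k0 x.
have hA : forall l t, (t < c)%N -> h l t = cube_point c m l t.
  move=> l t ht; rewrite /h /cube_point /x (ltn_addr _ ht) ht /=.
  by rewrite bx_lo.
have hB : cube (2 * c)%N (fun l => 2 ^ c * m l + y l)%N h.
  move=> l t ht; rewrite /h /cube_point.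
  rewrite (_ : (t < k0)%N = true); last by apply/idP; lia.
  rewrite /x (_ : (2 ^ c.+1 * m l + (2 * y l + σ l) = 2 * (2 ^ c * m l + y l) + σ l)%N); last first.
    by rewrite expnS mulnDr mulnA addnA.
  by rewrite (_ : (k0 - 1 - t = (2 * c - 1 - t).+1)%N) ?bitS ?half_child //; lia.
have hC : forall l, h l (2 * c)%N = σ l.
  move=> l; rewrite /h /cube_point (_ : (2 * c < k0)%N = true); last by apply/idP; lia.
  by rewrite /x (_ : (2 * c)%N = (c + c)%N) ?bx_top //; lia.
have hbm : forall l, (2 ^ c * m l + y l < 2 ^ (2 * c))%N.
  by move=> l; rewrite mul2n -addnn; apply: bound2.
have eS : Fs R s h <-> sprod R σ = Wk R c m y.
  rewrite (Fs_iff R hm hy hB) Rk_eq; split => <-; apply: eq_bigr => l _; by rewrite hC.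
have hloc : forall j, (1 <= j)%N -> (j < s)%N -> (Fs R j h <-> Fs R j (cube_point c m)).
  move=> j hj hjs; have := pos_lt hj hjs => hl.
  split; apply: Fs_local => l t ht; rewrite hA //; lia.
rewrite (meets_iff R l0 (@cube_point_in d k0 x)) -/h; split.
  move=> H; split; last by apply/eS; apply: H => //; lia.
  move=> j hj hjc; have hjs : (j < s)%N.
    case: (ltnP j s) => // h'; by have := ms_le hs h'; lia.
  by apply/(hloc _ hj hjs); apply: H => //; lia.
case=> HV He j hj hjk.
case: (ltngtP j s) => hjs.
- by apply/(hloc _ hj hjs); apply: HV => //; apply: pos_lt.
- have := ms_le (leq_trans hs (leqnSn s)) hjs; rewrite msS //; lia.
- by subst j; apply/eS.
Qed.

End Main.


Section Final.
Variable R : realType.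
Variable d : nat.
Variable l0 : 'I_d.
Variable s : nat.
Hypothesis hs : (1 <= s)%N.
Variables p q : 'I_d -> nat.
Hypotheses (hp : forall l, (p l < 2 ^ ms s)%N) (hq : forall l, (q l < 2 ^ ms s)%N).
Local Notation F := (@Fset R d).
Local Notation c := (ms s).
Local Notation k0 := (ms s + (ms s).+1)%N.
Let n := fun l => (2 ^ (2 * ms s) + 2 ^ ms s * p l + q l)%N.

Lemma n_eq l : n l = (q l + 2 ^ c * (p l + 2 ^ c * 1))%N.
Proof. by rewrite /n muln1 mulnDr -expnD addnn -mul2n; lia. Qed.

Lemma n_bnd l : (n l < 2 ^ k0)%N.
Proof. by rewrite n_eq; apply: nn_bound. Qed.

Lemma G_main m y (σ : {ffun 'I_d -> bool}) :
  (forall l, (m l < 2 ^ c)%N) -> (forall l, (y l < 2 ^ c)%N) ->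
  Wk R k0 n (fun l => 2 ^ c.+1 * m l + (2 * y l + σ l))%N *
    tauE R F k0 (fun l => 2 ^ c.+1 * m l + (2 * y l + σ l))%N =
  Wk R c q m * Wk R c p y * sprod R σ *
    (if asbool (Vm R s m /\ sprod R σ = Wk R c m y) then cst R d k0 else 0).
Proof.
move=> hm hy; rewrite (tau_val R l0) (asbool_equiv_eq (meets_main R l0 hs σ hm hy)).
congr (_ * _); rewrite /Wk /Wv /sprod -!big_split /=; apply: eq_bigr => l _.
rewrite n_eq.
exact: (W_main (m l) (σ l) (hy l) (hp l) (hq l) R).
Qed.

Lemma inner_sum (V : Prop) (M K : R) : M ^+ 2 = 1 ->
  \sum_(σ : {ffun 'I_d -> bool}) sprod R σ * (if asbool (V /\ sprod R σ = M) then K else 0)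
  = if asbool V then M * K * (2 ^ d.-1)%N%:R else 0.
Proof.
move=> hM; case: asboolP => HV; last first.
  by apply: big1 => σ _; case: asboolP => [[]|] //; rewrite mulr0.
transitivity (\sum_(σ in [pred σ : {ffun 'I_d -> bool} | sprod R σ == M]) (M * K)).
  rewrite [RHS]big_mkcond; apply: eq_bigr => σ _; rewrite inE /=.
  case: asboolP => [[_ ->]|H]; first by rewrite eqxx.
  by rewrite mulr0; case: eqP => // e; exfalso; exact: H (conj HV e).
rewrite sumr_const -(count_half l0 hM) mulr_natr; congr (_ *+ _).
by apply: eq_card => σ; rewrite !inE.
Qed.

Lemma kdelta_prod (m : 'I_d -> nat) :
  \prod_(l < d) ((p l == m l)%:R : R) = kdelta R p m.
Proof.
rewrite /kdelta; case: asboolP => [->|ne].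
  by apply: big1 => l _; rewrite eqxx.
have [[l hl]|H] := pselect (exists l, p l != m l); last first.
  exfalso; apply: ne; apply: funext => l; apply/eqP; apply/negPn/negP => h; apply: H.
  by exists l.
by rewrite (bigD1 l) //= (negPf hl) mul0r.
Qed.

Lemma orth_d (m : 'I_d -> nat) : (forall l, (m l < 2 ^ c)%N) ->
  \sum_(y : {ffun 'I_d -> 'I_(2 ^ c)}) Wk R c p (fun l => val (y l)) * Wk R c m (fun l => val (y l))
  = (2 ^ (c * d))%N%:R * kdelta R p m.
Proof.
move=> hm; rewrite /Wk /Wv.
under eq_bigr => y _ do rewrite -big_split /=.
transitivity (\sum_(y : {ffun 'I_d -> 'I_(2 ^ c)}) \prod_(l < d)
   (fun l (u : 'I_(2 ^ c)) => W R (p l) (cp1 c u) * W R (m l) (cp1 c u)) l (y l)).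
  by apply: eq_bigr => y _; apply: eq_bigr => l _.
rewrite -(bigA_distr_bigA (fun l (u : 'I_(2 ^ c)) => W R (p l) (cp1 c u) * W R (m l) (cp1 c u))) /=.
under eq_bigr => l _ do rewrite orth //.
rewrite big_split /= kdelta_prod prodr_const card_ord -natrX -expnM; congr (_ * _).
Qed.

Lemma k0_le : (k0 <= hat_rank n c)%N.
Proof.
rewrite /hat_rank leq_add2l; apply: (leq_trans _ (@leq_bigmax _ n l0)).
rewrite /n; apply: leq_trans (leq_addr _ _); apply: leq_trans (leq_addr _ _).
have := ltn_expl (2 * c) (ltnSn 1); lia.
Qed.

Lemma hat_sub m : (forall l, (m l < 2 ^ c)%N) ->
  hat (tauE R F) n c m = \sum_(y : {ffun 'I_d -> 'I_(2 ^ c.+1)})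
     Wk R k0 n (fun l => 2 ^ c.+1 * m l + y l)%N * tauE R F k0 (fun l => 2 ^ c.+1 * m l + y l)%N.
Proof.
move=> hm.
have -> : hat (tauE R F) n c m = Ssum R c m n (hat_rank n c) by [].
rewrite (collapse R l0 m (k0 := k0) (leq_addr _ _) n_bnd k0_le) /Ssum.
by rewrite (@sub_sum R d c (ms s).+1 m (fun a => Wk R k0 n a * tauE R F k0 a)).
Qed.

Lemma hat_part m : (forall l, (m l < 2 ^ c)%N) ->
  hat (tauE R F) n c m = e2 R ((s%:Z - 1) - (d * c)%N%:Z) * Wk R c q m * kdelta R p m
     * Ind R (cube c m `<=` Ftilde R (s - 1)).
Proof.
move=> hm.
rewrite hat_sub //.
rewrite (@sum_splitb R d c (fun a => Wk R k0 n (fun l => 2 ^ c.+1 * m l + a l)%N *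
   tauE R F k0 (fun l => 2 ^ c.+1 * m l + a l)%N)).
under eq_bigr => x _ do under eq_bigr => σ _ do
  rewrite (G_main σ hm (fun l => ltn_ord (x l))) -mulrA.
under eq_bigr => x _ do rewrite -mulr_sumr inner_sum ?Wv_sq //.
rewrite /Ind (asbool_equiv_eq (V_iff R hs m)).
case: asboolP => HV; last first.
  by rewrite mulr0; apply: big1 => x _; rewrite mulr0.
have eR : forall A B M K N : R, A * B * (M * K * N) = (A * K * N) * (B * M).
  by move=> *; ring.
under eq_bigr => x _ do rewrite eR.
rewrite -mulr_sumr orth_d // (cst_k0 R d hs) (cst_ms R (leq_ltn_trans (leq0n l0) (ltn_ord l0)) hs).
rewrite !(natr_pow2 R).
have h1 : e2 R (- (d * c)%N%:Z) * e2 R (c * d)%N = 1 by rewrite mulnC -e2D addNr /e2 expr0z.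
have h2 : e2 R (- (d.-1)%:Z) * e2 R (d.-1) = 1 by rewrite -e2D addNr /e2 expr0z.
transitivity (e2 R ((s%:Z - 1) - (d * c)%N%:Z) * Wk R c q m * kdelta R p m *
  (e2 R (- (d * c)%N%:Z) * e2 R (c * d)%N) * (e2 R (- (d.-1)%:Z) * e2 R (d.-1))).
  by ring.
by rewrite h1 h2 !mulr1.
Qed.

Lemma full_part :
  hat_full (tauE R F) n = e2 R ((s%:Z - 1) - (d * c)%N%:Z) * Wk R c q p
     * Ind R (cube c p `<=` Ftilde R (s - 1)).
Proof.
have -> : hat_full (tauE R F) n = Ssum R 0 (fun _ => 0%N) n (hat_rank n 0) by [].
have k0_le0 : (k0 <= hat_rank n 0)%N.
  rewrite /hat_rank add0n; apply: (leq_trans _ (@leq_bigmax _ n l0)).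
  rewrite /n; apply: leq_trans (leq_addr _ _); apply: leq_trans (leq_addr _ _).
  have := ltn_expl (2 * c) (ltnSn 1); lia.
rewrite (collapse R l0 (fun _ => 0%N) (k0 := k0) (leq0n _) n_bnd k0_le0) /Ssum.
rewrite (eq_bigl (fun _ => true)); last first.
  by move=> a; apply/asboolP => g _ l t ht; rewrite ltn0 in ht.
rewrite (@sum_split R d c (ms s).+1 (fun a => Wk R k0 n a * tauE R F k0 a)).
transitivity (\sum_(x : {ffun 'I_d -> 'I_(2 ^ c)}) hat (tauE R F) n c (fun l => val (x l))).
  by apply: eq_bigr => x _; rewrite (hat_sub (fun l => ltn_ord (x l))).
under eq_bigr => x _ do rewrite (hat_part (fun l => ltn_ord (x l))).
pose po : {ffun 'I_d -> 'I_(2 ^ c)} := [ffun l => Ordinal (hp l)].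
have epo : (fun l => val (po l)) = p by apply: funext => l; rewrite ffunE.
rewrite (bigD1 po) //= [X in _ + X]big1 ?addr0.
  by rewrite epo /kdelta; case: asboolP => // _; rewrite mulr1.
move=> x hx; rewrite /kdelta; case: asboolP => [e|]; last by rewrite mulr0 mul0r.
exfalso; move/eqP: hx; apply; apply/ffunP => l; apply: val_inj; rewrite ffunE /=.
by have := congr1 (fun f => f l) e.
Qed.

End Final.

Unset Implicit Arguments.

Theorem lemma2 (R : realType) (d : nat) (hd : (2 <= d)%N) (s : nat) (hs : (1 <= s)%N)
    (p q : 'I_d -> nat)
    (hp : forall l, (p l < 2 ^ ms s)%N) (hq : forall l, (q l < 2 ^ ms s)%N) :
  let n := fun l => (2 ^ (2 * ms s) + 2 ^ ms s * p l + q l)%N in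
  let tau := tauE R (@Fset R d) in
  let c : R := (2 : R) ^ ((s%:Z - 1) - (d * ms s)%:Z) in
  (forall m : 'I_d -> nat, (forall l, (m l < 2 ^ ms s)%N) ->
     hat tau n (ms s) m =
       c * Wk R (ms s) q m * kdelta R p m
         * Ind R (cube (ms s) m `<=` @Ftilde R d (s - 1)))
  /\
  hat_full tau n = c * Wk R (ms s) q p * Ind R (cube (ms s) p `<=` @Ftilde R d (s - 1)).
Proof.
move=> n tau c.
have l0 : 'I_d := Ordinal (ltnW hd).
split.
  by move=> m hm; exact: (hat_part R l0 hs hp hq hm).
exact: (full_part R l0 hs hp hq).
Qed.
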